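(* In the one-counter game $\mathcal{G}$ defined below, for every $j\in\{1,\dots,2^{2^n}\}$, every $d\in\Delta$ and every $i\in\mathbb{N}$ such that the configuration $C^w_i$ exists, $\mathrm{Verifier}$ has a strategy from the configuration $((j,d),i)$ guaranteeing that the play reaches the state $s'_F$ if and only if $C^w_i(j)=d$. In particular, $((1,(q_F,a)),i)$ is winning for $\mathrm{Verifier}$ iff $C^w_i(1)=(q_F,a)$, i.e. iff $\mathcal{T}$ accepts $w$ after $i$ steps.
   Context: Let $\mathcal{T}=(Q,q_0,\Sigma,\delta,q_F)$ be a deterministic Turing machine with tape alphabet $\Sigma=\{0,1,\#,a,r\}$ ($\#$ blank; $\mathcal{T}$ accepts immediately on reading $a$ and rejects immediately on reading $r$), transition function $\delta:Q\times\Sigma\to Q\times\Sigma\times\{\mathrm{Left},\mathrm{Right}\}$ with components $\delta_1,\delta_2,\delta_3$, and accepting state $q_F$. Let $w=w_1\dots w_{|w|}$ be an input, $n=|w|^k$, and assume $\mathcal{T}$ uses only cells $1,\dots,2^{2^n}$, with extra cells $0$ and $2^{2^n}+1$ initially holding $a$, the head initially on cell 1, and that if $\mathcal{T}$ halts accepting it does so in state $q_F$ with the head on cell 1 holding $a$. Let $\Delta=\Sigma\cup(Q\times\Sigma)$. The run of $\mathcal{T}$ on $w$ is the sequence of configurations $C^w_0C^w_1\dots$, each $C^w_i\in\Delta^{2^{2^n}+2}$ (indexed $0,\dots,2^{2^n}+1$) containing exactly one element of $Q\times\Sigma$ marking the state and head position; $C^w_0=a\,(q_0,w_1)\,w_2\dots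 w_{|w|}\,\#\dots\#\,a$; $C^w_i(j)$ is the $j$-th element. For $d\in\Delta$, $\mathrm{Pre}(d)$ is the set of triples: all $(d_1,d_2,d_3)\in\Sigma^3$ with $d_2=d$; all $((q,b),d_2,d_3)\in(Q\times\Sigma)\times\Sigma^2$ with either $d=(\delta_1(q,b),d_2)$ and $\delta_3(q,b)=\mathrm{Right}$, or $d=d_2$ and $\delta_3(q,b)\neq\mathrm{Right}$; all $(d_1,d_2,(q,b))\in\Sigma^2\times(Q\times\Sigma)$ with either $d=(\delta_1(q,b),d_2)$ and $\delta_3(q,b)=\mathrm{Left}$, or $d=d_2$ and $\delta_3(q,b)\neq\mathrm{Left}$; all $(d_1,(q,b),d_3)\in\Sigma\times(Q\times\Sigma)\times\Sigma$ with $d=\delta_2(q,b)$. The OCG $\mathcal{G}$ has players $\mathrm{Verifier},\mathrm{Falsifier}$, states $S'=(\{0,\dots,2^{2^n}+1\}\times(\Delta\cup\Delta^3))\cup\{s'_0,s'_z,s'_r,s'_F\}$, with $\mathrm{Verifier}$ controlling $(\{0,\dots,2^{2^n}+1\}\times\Delta)\cup\{s'_0\}$ and $\mathrm{Falsifier}$ the rest. Its transitions (state, weight, state) are exactly: $(s'_0,1,s'_0)$; $(s'_0,0,(1,(q_F,a)))$; $((j,d),0,(j,(d_1,d_2,d_3)))$ for $j\in\{1,\dots,2^{2^n}\}$, $(d_1,d_2,d_3)\in\mathrm{Pre}(d)$; for $j\in\{0,2^{2^n}+1\}$: $((j,a),0,s'_F)$ and $((j,d),0,s'_r)$ for $d\neq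 a$; $((j,d),0,s'_z)$ for all $(j,d)$ with $C^w_0(j)=d$; $(s'_z,0,s'_F)$; $(s'_z,-1,s'_r)$; and for $j\in\{1,\dots,2^{2^n}\}$ and $d_1,d_2,d_3\in\Delta$: $((j,(d_1,d_2,d_3)),-1,(j-1,d_1))$, $((j,(d_1,d_2,d_3)),-1,(j,d_2))$, $((j,(d_1,d_2,d_3)),-1,(j+1,d_3))$. Configurations are (state, counter value) pairs with counter in $\mathbb{N}$; a transition with weight $-1$ is disabled at counter value 0; plays are maximal sequences of configurations following enabled transitions (a play with no enabled move ends). A configuration is winning for $\mathrm{Verifier}$ if he has a strategy ensuring every compatible play visits $s'_F$. *)

(* Defs.v *)
From mathcomp Require Import all_boot.
Set Implicit Arguments. Unset Strict Implicit. Unset Printing Implicit Defensive.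

(* Tape alphabet Sigma = {0,1,#,a,r} *)
Inductive Sym := S0 | S1 | Sb | Sa | Sr .
Inductive Dir := DLeft | DRight.

Definition Delta (Q : Type) := (Sym + (Q * Sym))%type.

Record mconf (Q : Type) := MConf { mstate : Q; mhead : nat; mtape : nat -> Sym }.

Definition sym_of_bool (b : bool) : Sym := if b then S1 else S0.

Section TM.
Variables (Q : Type) (q0 qF : Q) (delta : Q -> Sym -> Q * Sym * Dir).
Variables (w : seq bool) (N : nat).  (* N = number of usable cells 1..N *)

Definition delta1 q b := (delta q b).1.1.
Definition delta2 q b := (delta q b).1.2.
Definition delta3 q b := (delta q b).2.

(* initial tape: a w_1 ... w_|w| # ... # a  on cells 0 .. N+1 *)
Definition tape0 (j : nat) : Sym :=
  if j == 0 then Sa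
  else if j <= size w then sym_of_bool (nth false w j.-1)
  else if j == N.+1 then Sa else Sb.

Definition minit : mconf Q := MConf q0 1 tape0.

Definition mstep (m : mconf Q) : option (mconf Q) :=
  match mtape m (mhead m) with
  | Sa | Sr => None
  | b => let: (q', b', dir) := delta (mstate m) b in
         Some (MConf q' (if dir is DLeft then (mhead m).-1 else (mhead m).+1)
                        (fun j => if j == mhead m then b' else mtape m j))
  end.

Definition mrun (i : nat) : option (mconf Q) := iter i (fun o => obind mstep o) (Some minit).

Definition accepts_at (i : nat) : Prop :=
  exists m, mrun i = Some m /\ mtape m (mhead m) = Sa.

Definition conf_of (m : mconf Q) : nat -> Delta Q :=
  fun j => if j == mhead m then inr (mstate m, mtape m j) else inl (mtape m j).

(* C^w_i (None if the run has halted before step i) *)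
Definition Cw (i : nat) : option (nat -> Delta Q) := omap conf_of (mrun i).
Definition C0 : nat -> Delta Q := conf_of minit.

Definition Pre (d : Delta Q) (t : Delta Q * Delta Q * Delta Q) : Prop :=
  match t with
  | (inl _, inl d2, inl _) => d = inl d2
  | (inr (q, b), inl d2, inl _) =>
      (d = inr (delta1 q b, d2) /\ delta3 q b = DRight) \/
      (d = inl d2 /\ delta3 q b <> DRight)
  | (inl _, inl d2, inr (q, b)) =>
      (d = inr (delta1 q b, d2) /\ delta3 q b = DLeft) \/
      (d = inl d2 /\ delta3 q b <> DLeft)
  | (inl _, inr (q, b), inl _) => d = inl (delta2 q b)
  | _ => False
  end.

Inductive gstate :=
  | Cell of nat & Delta Q
  | Trip of nat & (Delta Q * Delta Q * Delta Q)
  | s0' | sz' | sr' | sF'.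

Inductive weight := WDec | WZero | WInc.

Definition isVerifier (s : gstate) : bool :=
  match s with Cell _ _ | s0' => true | _ => false end.

Inductive edge : gstate -> weight -> gstate -> Prop :=
  | e_s0_loop : edge s0' WInc s0'
  | e_s0_start : edge s0' WZero (Cell 1 (inr (qF, Sa)))
  | e_pre j d t : 1 <= j <= N -> Pre d t -> edge (Cell j d) WZero (Trip j t)
  | e_bnd_acc j : (j = 0 \/ j = N.+1) -> edge (Cell j (inl Sa)) WZero sF'
  | e_bnd_rej j d : (j = 0 \/ j = N.+1) -> d <> inl Sa -> edge (Cell j d) WZero sr'
  | e_init j d : j <= N.+1 -> C0 j = d -> edge (Cell j d) WZero sz'
  | e_z_F : edge sz' WZero sF'
  | e_z_r : edge sz' WDec sr'
  | e_left j x y z : 1 <= j <= N -> edge (Trip j (x, y, z)) WDec (Cell j.-1 x)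
  | e_mid j x y z : 1 <= j <= N -> edge (Trip j (x, y, z)) WDec (Cell j y)
  | e_right j x y z : 1 <= j <= N -> edge (Trip j (x, y, z)) WDec (Cell j.+1 z).

Definition upd (wt : weight) (c c' : nat) : Prop :=
  match wt with
  | WInc => c' = c.+1
  | WZero => c' = c
  | WDec => 0 < c /\ c' = c.-1
  end.

Definition gconf := (gstate * nat)%type.

Definition gmove (x y : gconf) : Prop := exists wt, edge x.1 wt y.1 /\ upd wt x.2 y.2.

Definition strategy := seq gconf -> gconf -> gconf.

Definition valid_strategy (sg : strategy) : Prop :=
  forall past x, isVerifier x.1 -> (exists y, gmove x y) -> gmove x (sg past x).

Definition follows (sg : strategy) (pi : nat -> gconf) (k : nat) : Prop :=
  gmove (pi k) (pi k.+1) /\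
  (isVerifier (pi k).1 -> pi k.+1 = sg [seq pi i | i <- iota 0 k] (pi k)).

Definition inf_play (sg : strategy) (c : gconf) (pi : nat -> gconf) : Prop :=
  pi 0 = c /\ forall k, follows sg pi k.

Definition fin_play (sg : strategy) (c : gconf) (n : nat) (pi : nat -> gconf) : Prop :=
  pi 0 = c /\ (forall k, k < n -> follows sg pi k) /\ ~ (exists y, gmove (pi n) y).

Definition VerifierWins (c : gconf) : Prop :=
  exists sg : strategy, valid_strategy sg /\
    (forall pi, inf_play sg c pi -> exists k, (pi k).1 = sF') /\
    (forall n pi, fin_play sg c n pi -> exists k, k <= n /\ (pi k).1 = sF').

End TM.

(* Main.v *)
Require Import Defs.
From mathcomp Require Import all_boot zify.
From Stdlib Require Import Classical ClassicalEpsilon.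
Set Implicit Arguments. Unset Strict Implicit. Unset Printing Implicit Defensive.

Lemma step_core Q (delta: Q->Sym->Q*Sym*Dir) (m m' : mconf Q) j d :
  1 <= mhead m -> 1 <= j -> mstep delta m = Some m' ->
  (Pre delta d (conf_of m j.-1, conf_of m j, conf_of m j.+1) <-> d = conf_of m' j).
Proof.
case: m => q h tp /= h1 j1. rewrite /mstep /=.
have key : forall b, tp h = b -> b <> Sa -> b <> Sr ->
   (let: (q', b', dir) := delta q b in
         Some (MConf q' (if dir is DLeft then h.-1 else h.+1)
                        (fun j => if j == h then b' else tp j))) = Some m' ->
  (Pre delta d
    ((if j.-1 == h then inr (q, tp j.-1) else inl (tp j.-1)),
     (if j == h then inr (q, tp j) else inl (tp j)),
     (if j.+1 == h then inr (q, tp j.+1) else inl (tp j.+1))) <-> d = conf_of m' j).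
  move=> b Eb nA nR.
  case E: (delta q b) => [[q' b'] dir] [<-].
  rewrite /conf_of /=.
  case: dir E => E; do ! (case: eqP => ?); try (exfalso; lia); subst;
    rewrite /= /delta1 /delta2 /delta3 ?E /=; split; intuition congruence.
rewrite /conf_of /=.
case Eb: (tp h) => [| | | |] //; apply: key => //.
Qed.

Lemma Pre_inl1 Q (delta: Q->Sym->Q*Sym*Dir) d s1 s2 y z :
  Pre delta d (inl s1, y, z) <-> Pre delta d (inl s2, y, z).
Proof. by case: y => [?|[??]]; case: z => [?|[??]]. Qed.

Lemma Pre_inl3 Q (delta: Q->Sym->Q*Sym*Dir) d s1 s2 x y :
  Pre delta d (x, y, inl s1) <-> Pre delta d (x, y, inl s2).
Proof. by case: x => [?|[??]]; case: y => [?|[??]]. Qed.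

Lemma conf_of_off Q (m : mconf Q) j : j <> mhead m -> conf_of m j = inl (mtape m j).
Proof. by rewrite /conf_of; case: eqP. Qed.

Section Game.
Variables (Q : Type) (q0 qF : Q) (delta : Q -> Sym -> Q * Sym * Dir) (w : seq bool) (N : nat).
Hypothesis HN : 0 < N.
Hypothesis Hhead : forall i m, mrun q0 delta w N i = Some m -> 1 <= mhead m <= N.

Local Notation run := (mrun q0 delta w N).
Local Notation cw := (Cw q0 delta w N).
Local Notation c0 := (C0 q0 w N).
Local Notation gmv := (gmove q0 qF delta w N).

Definition Gc (c j : nat) (x : Delta Q) : Prop :=
  (1 <= j <= N /\ exists C, cw c = Some C /\ C j = x) \/
  ((j = 0 \/ j = N.+1) /\ (x = inl Sa \/ (c = 0 /\ c0 j = x))).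

Lemma cw_run c C : cw c = Some C -> exists m, run c = Some m /\ C = conf_of m.
Proof. rewrite /Cw; case: (run c) => //= m [<-]; by exists m. Qed.

Lemma run_pred c m' : run c.+1 = Some m' -> exists m, run c = Some m /\ mstep delta m = Some m'.
Proof. rewrite /mrun iterS -/(mrun _ _ _ _ _); case: (run c) => //= m E; by exists m. Qed.

Lemma Gc_in c j x m : 1 <= j <= N -> run c = Some m -> Gc c j x -> x = conf_of m j.
Proof.
move=> hj hr [[_ [C [E <-]]]|[[e|e] _]]; try lia.
by move: E; rewrite /Cw hr => -[<-].
Qed.

Lemma Gc_bnd c j x : (j = 0 \/ j = N.+1) -> Gc c j x -> exists s, x = inl s.
Proof.
move=> hj [[hj' _]|[_ [->|[_ <-]]]]; first lia; first by eexists.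
rewrite /C0 conf_of_off //=; first by eexists.
case: hj => ->; lia.
Qed.

Lemma sound c m' j x y z d : 0 < c -> run c = Some m' -> 1 <= j <= N ->
  Gc c.-1 j.-1 x -> Gc c.-1 j y -> Gc c.-1 j.+1 z -> Pre delta d (x, y, z) -> conf_of m' j = d.
Proof.
case: c => // c _ hr hj gx gy gz.
have [m [hm hs]] := run_pred hr.
have hh := Hhead hm.
have -> := Gc_in hj hm gy.
move=> P; symmetry; apply/(step_core _ _ _ hs); [lia|lia|].
have P1 : Pre delta d (conf_of m j.-1, conf_of m j, z).
  case: (ltnP 1 j) => hj1.
    have ex : x = conf_of m j.-1 by apply: (Gc_in _ hm gx); lia.
    by rewrite -ex.
  have [s ex] : exists s, x = inl s by apply: (Gc_bnd _ gx); lia.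
  subst x.
  rewrite conf_of_off; last lia.
  exact: (proj1 (Pre_inl1 delta d s _ _ _) P).
case: (ltnP j N) => hjN.
  have ez : z = conf_of m j.+1 by apply: (Gc_in _ hm gz); lia.
  by rewrite -ez.
have [s ez] : exists s, z = inl s by apply: (Gc_bnd _ gz); lia.
subst z.
rewrite (@conf_of_off _ m j.+1); last lia.
exact: (proj1 (Pre_inl3 delta d s _ _ _) P1).
Qed.

Lemma complete c m' j : run c.+1 = Some m' -> 1 <= j <= N ->
  exists x y z, Pre delta (conf_of m' j) (x, y, z) /\ Gc c j.-1 x /\ Gc c j y /\ Gc c j.+1 z.
Proof.
move=> hr hj.
have [m [hm hs]] := run_pred hr.
have hh := Hhead hm.
have hcw : cw c = Some (conf_of m) by rewrite /Cw hm.
have P0 : Pre delta (conf_of m' j) (conf_of m j.-1, conf_of m j, conf_of m j.+1).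
  by apply/(step_core _ _ _ hs); [lia|lia|].
exists (if j == 1 then inl Sa else conf_of m j.-1), (conf_of m j),
       (if j == N then inl Sa else conf_of m j.+1).
split.
  have P1 : Pre delta (conf_of m' j) (if j == 1 then inl Sa else conf_of m j.-1, conf_of m j, conf_of m j.+1).
    case: eqP => e1 //.
    have ex : conf_of m j.-1 = inl (mtape m j.-1) by apply: conf_of_off; lia.
    rewrite ex in P0; exact: (proj1 (Pre_inl1 _ _ _ _ _ _) P0).
  case: (@eqP _ j N) => e2 //.
  have ez : conf_of m j.+1 = inl (mtape m j.+1) by apply: conf_of_off; lia.
  rewrite ez in P1; exact: (proj1 (Pre_inl3 _ _ _ _ _ _) P1).
split; [|split].
- case: eqP => e1.
    by right; split; [left; lia | left].
  by left; split; [lia | exists (conf_of m)].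
- by left; split; [lia | exists (conf_of m)].
- case: eqP => e1.
    by right; split; [right; lia | left].
  by left; split; [lia | exists (conf_of m)].
Qed.


Lemma no_move_F x y : gmv x y -> x.1 <> sF' Q.
Proof. case: x y => s c [s' c'] [wt [/= E _]] e; subst s; inversion E. Qed.

Definition pot (x : gconf Q) : nat :=
  match x with
  | (Cell _ _, c) => 2 * c + 3
  | (Trip _ _, c) => 2 * c + 2
  | (sz', _) => 1
  | _ => 0
  end.

Lemma pot_dec x y : gmv x y -> x.1 <> s0' Q -> pot y < pot x.
Proof.
case: x y => s c [s' c'] [wt [/= E U]] ns.
destruct E; rewrite /= in U ns |- *; try (by []); try lia.
Qed.

Lemma ex_min (P : nat -> Prop) : (exists n, P n) -> exists n, P n /\ forall k, k < n -> ~ P k.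
Proof.
move=> [n hn].
have H : forall m n, n <= m -> P n -> exists n, P n /\ forall k, k < n -> ~ P k.
  elim=> [|m IH] n0 hle hn0.
    by exists n0; split=> // k hk; lia.
  case: (classic (exists k, k < n0 /\ P k)) => [[k [hk pk]]|hno].
    by apply: (IH k) => //; lia.
  by exists n0; split => // k hk pk; apply: hno; exists k.
exact: (H n n (leqnn n) hn).
Qed.

Lemma win_gen (P : gconf Q -> Prop) :
  (forall x, P x -> x.1 <> s0' Q) ->
  (forall x, P x -> isVerifier x.1 -> x.1 <> sF' Q -> exists y, gmv x y /\ P y) ->
  (forall x, P x -> ~~ isVerifier x.1 -> x.1 <> sF' Q ->
      (exists y, gmv x y) /\ forall y, gmv x y -> P y) ->
  forall c, P c -> VerifierWins q0 qF delta w N c.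
Proof.
move=> P0 P1 P2 c Pc.
pose inh : inhabited (gconf Q) := inhabits (sF' Q, 0).
pose sg : strategy Q := fun _ x =>
  epsilon inh (fun y => gmv x y /\ ((exists y', gmv x y' /\ P y') -> P y)).
have spec : forall p x, (exists y, gmv x y) ->
    gmv x (sg p x) /\ ((exists y', gmv x y' /\ P y') -> P (sg p x)).
  move=> p x [y0 hy0].
  have ex : exists y, gmv x y /\ ((exists y', gmv x y' /\ P y') -> P y).
    case: (classic (exists y', gmv x y' /\ P y')) => [[y' [h1 h2]]|hn].
      by exists y'; split.
    by exists y0; split => // /hn.
  exact: (epsilon_spec inh (fun y => gmv x y /\ ((exists y', gmv x y' /\ P y') -> P y)) ex).
have step : forall pi k, follows q0 qF delta w N sg pi k -> P (pi k) -> P (pi k.+1).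
  move=> pi k [hm hv] hp.
  have nF := no_move_F hm.
  case hV : (isVerifier (pi k).1).
    rewrite (hv hV); apply: (proj2 (spec _ _ (ex_intro _ _ hm))).
    exact: P1.
  apply: (proj2 (P2 _ hp (negbT hV) nF)) hm.
exists sg; split; [|split].
- by move=> p x _ hm; exact: (proj1 (spec p x hm)).
- move=> pi [h0 hf]; exfalso.
  have all : forall k, P (pi k) /\ pot (pi k) + k <= pot c.
    elim => [|k [hp hk]]; first by rewrite h0; split; [|lia].
    have hp' := step pi k (hf k) hp; split => //.
    have := pot_dec (proj1 (hf k)) (P0 _ hp); lia.
  have := proj2 (all (pot c).+1); lia.
- move=> n pi [h0 [hf hn]]; apply: NNPP => hne.
  have all : forall k, k <= n -> P (pi k).
    elim => [|k IH] hk; first by rewrite h0.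
    exact: (step _ _ (hf k hk) (IH (ltnW hk))).
  have hPn := all n (leqnn n).
  have nF : (pi n).1 <> sF' Q by move=> e; apply: hne; exists n; split.
  apply: hn; case hV: (isVerifier (pi n).1).
    by have [y [hy _]] := P1 _ hPn hV nF; exists y.
  by case: (P2 _ hPn (negbT hV) nF).
Qed.

Lemma lose_gen (L : gconf Q -> Prop) :
  (forall x, L x -> x.1 <> s0' Q /\ x.1 <> sF' Q) ->
  (forall x, L x -> isVerifier x.1 -> forall y, gmv x y -> L y) ->
  (forall x, L x -> ~~ isVerifier x.1 -> (exists y, gmv x y) -> exists y, gmv x y /\ L y) ->
  forall c, L c -> ~ VerifierWins q0 qF delta w N c.
Proof.
move=> L0 L1 L2 c Lc [sg [vs [_ hfin]]].
pose inh : inhabited (gconf Q) := inhabits (sF' Q, 0).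
pose nxt := fun (p : seq (gconf Q)) (x : gconf Q) =>
  if isVerifier x.1 then sg p x else epsilon inh (fun y => gmv x y /\ L y).
pose F := fix F n := match n with
  | 0 => ([::], c)
  | n'.+1 => let pr := F n' in (rcons pr.1 pr.2, nxt pr.1 pr.2) end.
pose pi := fun n => (F n).2.
have hF : forall n, (F n).1 = [seq pi i | i <- iota 0 n].
  elim => [|n IH]; first by [].
  have -> : iota 0 n.+1 = iota 0 n ++ [:: n] by rewrite -addn1 iotaD.
  by rewrite map_cat cats1 -IH.
have hpiS : forall n, pi n.+1 = nxt [seq pi i | i <- iota 0 n] (pi n).
  by move=> n; rewrite -hF.
have A : forall k, (forall k', k' < k -> exists y, gmv (pi k') y) ->
    L (pi k) /\ pot (pi k) + k <= pot c /\ (forall k', k' < k -> follows q0 qF delta w N sg pi k').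
  elim => [|k IH] hm.
    by split; [done | split; [rewrite addn0; exact: leqnn | by []]].
  have [hL [hp hfo]] := IH (fun k' hk' => hm k' (ltn_trans hk' (ltnSn k))).
  have [y hy] := hm k (ltnSn k).
  have fk : follows q0 qF delta w N sg pi k /\ L (pi k.+1).
    rewrite /follows hpiS /nxt; case hV: (isVerifier (pi k).1) => /=.
      have g := vs [seq pi i | i <- iota 0 k] _ hV (ex_intro _ y hy).
      by split; [split | exact: (L1 _ hL hV _ g)].
    have [y' [g l]] := L2 _ hL (negbT hV) (ex_intro _ y hy).
    have [g' l'] := epsilon_spec inh (fun y => gmv (pi k) y /\ L y) (ex_intro _ y' (conj g l)).
    by split; [split | ].
  split; first exact: fk.2.
  split.
    have := pot_dec (proj1 fk.1) (proj1 (L0 _ hL)). lia.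
  move=> k' hk'; have [lt|eq] : k' < k \/ k' = k by lia.
    exact: hfo.
  by rewrite eq; exact: fk.1.
have [n [hn hmin]] : exists n, ~ (exists y, gmv (pi n) y) /\
    forall k, k < n -> exists y, gmv (pi k) y.
  have ex : exists n, ~ (exists y, gmv (pi n) y).
    apply: NNPP => H.
    have hall : forall k, exists y, gmv (pi k) y.
      by move=> k; apply: NNPP => hk; apply: H; exists k.
    have := proj1 (proj2 (A (pot c).+1 (fun k' _ => hall k'))); lia.
  have [n [hn hm]] := ex_min ex.
  exists n; split => // k hk; apply: NNPP; exact: hm.
have [hLn [_ hfo]] := A n hmin.
have [k [hk e]] := hfin n pi (conj erefl (conj hfo hn)).
have [hLk _] := A k (fun k' hk' => hmin k' (leq_trans hk' hk)).
exact: (proj2 (L0 _ hLk) e).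
Qed.


Lemma edge_cell_inv j d wt s' : edge q0 qF delta w N (Cell j d) wt s' ->
    (exists t, wt = WZero /\ s' = Trip j t /\ 1 <= j <= N /\ Pre delta d t) \/
    (wt = WZero /\ s' = sF' Q /\ (j = 0 \/ j = N.+1) /\ d = inl Sa) \/
    (wt = WZero /\ s' = sr' Q /\ (j = 0 \/ j = N.+1) /\ d <> inl Sa) \/
    (wt = WZero /\ s' = sz' Q /\ j <= N.+1 /\ c0 j = d).
Proof.
move=> E; inversion E; subst.
- by left; eexists.
- by right; left.
- by right; right; left.
- by right; right; right.
Qed.

Lemma edge_trip_inv j t wt s' : edge q0 qF delta w N (Trip j t) wt s' ->
  wt = WDec /\ 1 <= j <= N /\ (s' = Cell j.-1 t.1.1 \/ s' = Cell j t.1.2 \/ s' = Cell j.+1 t.2).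
Proof. move=> E; inversion E; subst; split => //; split => //; tauto. Qed.

Lemma edge_sz_inv wt s' : edge q0 qF delta w N (sz' Q) wt s' ->
  (wt = WZero /\ s' = sF' Q) \/ (wt = WDec /\ s' = sr' Q).
Proof. move=> E; inversion E; subst; tauto. Qed.

Lemma edge_sr_inv wt s' : edge q0 qF delta w N (sr' Q) wt s' -> False.
Proof. move=> E; inversion E. Qed.

Definition Wp (x : gconf Q) : Prop :=
  match x with
  | (Cell j d, c) => Gc c j d
  | (Trip j (a, b, e), c) => 1 <= j <= N /\ 0 < c /\ Gc c.-1 j.-1 a /\ Gc c.-1 j b /\ Gc c.-1 j.+1 e
  | (sz', c) => c = 0
  | (sF', _) => True
  | _ => False
  end.

Definition Lc c j d := ~ Gc c j d /\ exists C, cw c = Some C.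

Definition Lp (x : gconf Q) : Prop :=
  match x with
  | (Cell j d, c) => Lc c j d
  | (Trip j (a, b, e), c) => (exists C, cw c = Some C) /\
       (c = 0 \/ Lc c.-1 j.-1 a \/ Lc c.-1 j b \/ Lc c.-1 j.+1 e)
  | (sz', c) => 0 < c
  | (sr', _) => True
  | _ => False
  end.

Lemma W_ok c : Wp c -> VerifierWins q0 qF delta w N c.
Proof.
apply: win_gen.
- by move=> [s c']; case: s => [j d|j [[a b] e]| | | |].
- move=> [s c']; case: s => [j d|j [[a b] e]| | | |] /= hW hV hF; try done.
  case: hW => [[hj [C [E e]]] | [hb [ea | [ec e]]]].
  + case: c' E => [|c'] E.
      exists (sz' Q, 0); split => //; exists WZero; split => //=.
      apply: e_init; first lia.
      by move: E => /= [eC]; rewrite -e -eC.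
    have [m' [hr eC]] := cw_run E; subst C.
    have [x [y [z [P [gx [gy gz]]]]]] := complete hr hj.
    exists (Trip j (x, y, z), c'.+1); split.
      by exists WZero; split => //=; apply: e_pre => //; rewrite -e.
    by rewrite /=; split.
  + by exists (sF' Q, c'); split => //; exists WZero; split => //=; rewrite ea; apply: e_bnd_acc.
  + subst c'; exists (sz' Q, 0); split => //; exists WZero; split => //=.
    by apply: e_init => //; case: hb => ->; lia.
- move=> [s c']; case: s => [j d|j [[a b] e]| | | |] /= hW hV hF; try done.
  + case: hW => [hj [hc [ga [gb ge]]]]; split.
      by exists (Cell j b, c'.-1); exists WDec; split; [exact: e_mid | by split].
    move=> [s' c''] [wt [/= E U]].
    have [ewt [_ hs]] := edge_trip_inv E; subst wt.
    case: U => _ ->.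
    by case: hs => [->|[->|->]].
  + subst c'; split.
      by exists (sF' Q, 0); exists WZero; split => //; exact: e_z_F.
    move=> [s' c''] [wt [/= E U]].
    by case: (edge_sz_inv E) => [[_ ->]|[ew ->]] //; subst wt; case: U.
Qed.

Lemma L_ok c0' : Lp c0' -> ~ VerifierWins q0 qF delta w N c0'.
Proof.
apply: lose_gen.
- by move=> [s c']; case: s => [j d|j [[a b] e]| | | |].
- move=> [s c]; case: s => [j d|j [[a b] e]| | | |] /= hL hV [s' c'] [wt [/= E U]]; try done.
  case: hL => nG [C hC].
  case: (edge_cell_inv E) =>
    [[[[a b] e] [ew [-> [hj P]]]]|[[ew [-> [hb ea]]]|[[ew [-> _]]|[ew [-> [hj0 ec]]]]]];
    subst wt; rewrite /= in U; subst c' => //=.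
  + split; first by exists C.
    case: (posnP c) => [->|hc]; [by left | right].
    apply: NNPP => H; apply: nG.
    have [m' [hr eC]] := cw_run hC.
    have [m [hm _]] : exists m, run c.-1 = Some m /\ mstep delta m = Some m'.
      by apply: run_pred; rewrite prednK.
    have hcw : exists C', cw c.-1 = Some C' by exists (conf_of m); rewrite /Cw hm.
    have Ga : Gc c.-1 j.-1 a by apply: NNPP => na; apply: H; left.
    have Gb : Gc c.-1 j b by apply: NNPP => na; apply: H; right; left.
    have Ge : Gc c.-1 j.+1 e by apply: NNPP => na; apply: H; right; right.
    left; split => //; exists (conf_of m'); split; first by rewrite /Cw hr.
    exact: (sound hc hr hj Ga Gb Ge P).
  + by apply: nG; right; split => //; left.
  + case: (posnP c) => [c0|] //; exfalso; apply: nG; subst c.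
    have [hb|hin] : (j = 0 \/ j = N.+1) \/ 1 <= j <= N by lia.
      by right; split => //; right.
    by left; split => //; exists (C0 q0 w N).
- move=> [s c]; case: s => [j d|j [[a b] e]| | | |] /= hL hV; try done.
  + case: hL => _ hc [[s' c'] [wt [/= E U]]].
    have [ewt [hj _]] := edge_trip_inv E; subst wt.
    case: U => hc0 _.
    case: hc => [c0|[la|[lb|le]]]; first lia.
    * by exists (Cell j.-1 a, c.-1); split => //; exists WDec; split => //=; exact: e_left.
    * by exists (Cell j b, c.-1); split => //; exists WDec; split => //=; exact: e_mid.
    * by exists (Cell j.+1 e, c.-1); split => //; exists WDec; split => //=; exact: e_right.
  + move=> _; exists (sr' Q, c.-1); split => //; exists WDec; split => //=; exact: e_z_r.
  + by move=> [[s' c'] [wt [/= E _]]]; case: (edge_sr_inv E).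
Qed.

Lemma part1 j d i C : 1 <= j <= N -> cw i = Some C ->
  (VerifierWins q0 qF delta w N (Cell j d, i) <-> C j = d).
Proof.
move=> hj E; split.
- move=> hw; apply: NNPP => ne; apply: (@L_ok (Cell j d, i)) hw.
  split; last by exists C.
  move=> [[_ [C' [E' e]]]|[hb _]]; last lia.
  by apply: ne; rewrite E in E'; case: E' => ->.
- by move=> e; apply: W_ok; left; split => //; exists C.
Qed.

End Game.

Theorem mainTheorem6 (Q : finType) (q0 qF : Q) (delta : Q -> Sym -> Q * Sym * Dir)
  (w : seq bool) (k : nat) :
  let N := 2 ^ (2 ^ (size w ^ k)) in
  (* T uses only the cells 1, ..., N *)
  (forall i m, mrun q0 delta w N i = Some m -> 1 <= mhead m <= N) ->
  (* if T halts accepting, it does so in state q_F with the head on cell 1 *)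
  (forall i m, mrun q0 delta w N i = Some m -> mtape m (mhead m) = Sa ->
     mstate m = qF /\ mhead m = 1) ->
  (forall (j : nat) (d : Delta Q) (i : nat) (C : nat -> Delta Q),
     1 <= j <= N -> Cw q0 delta w N i = Some C ->
     (VerifierWins q0 qF delta w N (Cell j d, i) <-> C j = d)) /\
  (forall (i : nat) (C : nat -> Delta Q),
     Cw q0 delta w N i = Some C ->
     (VerifierWins q0 qF delta w N (Cell 1 (inr (qF, Sa)), i) <-> C 1 = inr (qF, Sa)) /\
     (C 1 = inr (qF, Sa) <-> accepts_at q0 delta w N i)).
Proof.
move=> N Hhead Hacc.
have HN : 0 < N by rewrite expn_gt0.
split.
  by move=> j d i C hj E; apply: (part1 qF HN Hhead).
move=> i C E; split.
  by apply: (part1 qF HN Hhead).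
have [m [hr ->]] := cw_run E.
split.
- rewrite /conf_of; case: eqP => // e [e1 e2].
  by exists m; split => //; rewrite -e.
- move=> [m2 [hr2 hA]].
  rewrite hr in hr2; case: hr2 => ?; subst m2.
  have [hs hh] := Hacc _ _ hr hA.
  rewrite hh in hA.
  by rewrite /conf_of hh eqxx hs hA.
Qed.
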